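(* Let $\mathcal{B}$ be any unicast index coding problem with receivers $u_1,\dots,u_n$ and demand sets $W_1,\dots,W_n$, and let $G$ be its equivalent single unicast problem (ESUP). Then $$\beta^*_G\big(\max_i |W_i|\big)\le \beta^*_{\mathcal{B}}(1)\le \beta^*_G(1).$$
   Context: Index coding model. A unicast index coding problem has $n$ receivers $u_1,\dots,u_n$ and $N$ messages $\mathbf{x}_1,\dots,\mathbf{x}_N$, each a vector in $\mathcal{A}^m$ for a finite alphabet $\mathcal{A}$ and a positive integer $m$ (all messages have the same length). Receiver $u_i$ demands $\mathbf{x}_j$, $j\in W_i$, and knows $\mathbf{x}_j$, $j\in K_i$, where $W_i,K_i\subseteq[N]$, $W_i\cap K_i=\emptyset$, the $W_i$ are pairwise disjoint and every message is demanded by exactly one receiver. A single unicast problem is the case where every receiver demands exactly one message ($n=N$). An index code consists of an encoder mapping the messages to a codeword $\mathbf{c}\in\mathcal{A}^\ell$, subsets $R_i\subseteq[\ell]$ (receiver $u_i$ observes only $\mathbf{c}_{R_i}$), and decoders at each $u_i$ mapping $(\mathbf{c}_{R_i},\mathbf{x}_{K_i})$ to $\mathbf{x}_{W_i}$; it is valid if every receiver decodes correctly for all message values. Broadcast rate $\beta=\ell/m$; locality at $u_i$ is $r_i=|R_i|/(m|W_i|)$; locality of the code is $r=\max_i r_i$. For a problem $\mathcal{P}$, $\beta^*_{\mathcal{P}}(r)$ is the infimum of rates of valid index codes, over all $m\ge1$, with locality at most $r$. ESUP: given $\mathcal{B}$, its ESUP is the single unicast problem with the same $N$ messages and $N=\sum_i|W_i|$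 receivers: for each $u_i$ and each $j\in W_i$ there is one receiver that demands only $\mathbf{x}_j$ and has side information $\mathbf{x}_{K_i}$. *)

(* Defs.v *)
From mathcomp Require Import all_boot all_order all_algebra.
From mathcomp Require Import boolp classical_sets reals constructive_ereal ereal.
Set Implicit Arguments. Unset Strict Implicit. Unset Printing Implicit Defensive.
Import Order.TTheory GRing.Theory Num.Theory.
Local Open Scope classical_set_scope.
Local Open Scope ring_scope.

(* An index coding problem with n receivers and N messages:
   receiver i demands the messages in W i and knows those in K i. *)
Record ic_problem (n N : nat) := ICProblem {
  icW : 'I_n -> {set 'I_N};
  icK : 'I_n -> {set 'I_N} }.

(* Unicast: W_i, K_i disjoint; W_i pairwise disjoint; every message is
   demanded by (exactly) one receiver; each W_i nonempty (needed for the
   locality |R_i|/(m|W_i|) to be defined). *)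
Definition unicast (n N : nat) (P : ic_problem n N) : Prop :=
  [/\ (forall i j, j \in icW P i -> j \notin icK P i),
      (forall i i' j, i != i' -> j \in icW P i -> j \notin icW P i'),
      (forall j, exists i, j \in icW P i) &
      (forall i, exists j, j \in icW P i)].

(* Equivalent single unicast problem: one receiver per message j, demanding
   only x_j, with the side information K_i of the receiver u_i with j in W_i. *)
Definition esup_K (n N : nat) (P : ic_problem n N) (j : 'I_N) : {set 'I_N} :=
  if [pick i | j \in icW P i] is Some i then icK P i else finset.set0.

Definition esup (n N : nat) (P : ic_problem n N) : ic_problem N N :=
  ICProblem (fun j : 'I_N => finset.set1 j) (esup_K P).

(* An index code with message length m and code length l over alphabet A:
   encoder E and observed positions Rs i. *)
Definition valid_code (A : Type) (n N : nat) (P : ic_problem n N) (m l : nat)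
  (E : ('I_N -> 'I_m -> A) -> 'I_l -> A) (Rs : 'I_n -> {set 'I_l}) : Prop :=
  forall i : 'I_n,
  exists D : ({k : 'I_l | k \in Rs i} -> A) ->
             ({j : 'I_N | j \in icK P i} -> 'I_m -> A) ->
             forall j : 'I_N, j \in icW P i -> 'I_m -> A,
  forall (x : 'I_N -> 'I_m -> A) (j : 'I_N) (hj : j \in icW P i),
    D (fun k => E x (sval k)) (fun j' => x (sval j')) j hj = x j.

Definition locality_le (R : realType) (n N : nat) (P : ic_problem n N)
  (m l : nat) (Rs : 'I_n -> {set 'I_l}) (r : R) : Prop :=
  forall i : 'I_n, (#|Rs i|%:R / (m%:R * #|icW P i|%:R) <= r).

Definition beta_star (A : finType) (R : realType) (n N : nat)
  (P : ic_problem n N) (r : R) : \bar R :=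
  ereal_inf [set x : \bar R | exists (m l : nat)
      (E : ('I_N -> 'I_m -> A) -> 'I_l -> A) (Rs : 'I_n -> {set 'I_l}),
      [/\ (0 < m)%N, valid_code P E Rs, locality_le P m Rs r &
          x = (l%:R / m%:R)%:E]].

(* Main.v *)
Require Import Defs.
From mathcomp Require Import all_boot all_order all_algebra.
From mathcomp Require Import boolp classical_sets reals constructive_ereal ereal.
Import Order.TTheory GRing.Theory Num.Theory.
Local Open Scope ring_scope.

Lemma card_bigcup_sum (T I : finType) (W : {set I}) (F : I -> {set T}) :
  (#|\big[@finset.setU _/finset.set0]_(j in W) F j| <= \sum_(j in W) #|F j|)%N.
Proof.
elim/big_rec2: _ => [|j U s _ IH]; first by rewrite cards0.
apply: leq_trans (leq_card_setU _ _) _; exact: leq_add.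
Qed.

Lemma esupK_eq {n N : nat} {P : ic_problem n N} {i : 'I_n} {j : 'I_N} :
  unicast P -> j \in icW P i -> esup_K P j = icK P i.
Proof.
move=> [_ Hdis _ _] Hj; rewrite /esup_K; case: pickP => [i' Hi'|H].
  case: (eqVneq i' i) => [->//|ne].
  by move: (Hdis _ _ _ ne Hi'); rewrite Hj.
by move: (H i); rewrite Hj.
Qed.

Theorem theorem2 (A : finType) (R : realType) (n N : nat) (P : ic_problem n N) :
  unicast P ->
  ((beta_star A (esup P) ((\max_(i < n) #|icW P i|)%N%:R : R)
      <= beta_star A P (1 : R))%E /\
   (beta_star A P (1 : R) <= beta_star A (esup P) (1 : R))%E).
Proof.
move=> HU; have HU' := HU; case: HU' => [_ Hdis Hcov Hne].
have [g Hg] := choice Hcov.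
split; apply: ereal_inf_le_tmp => x [m [l [E [Rs [Hm Hv Hl ->]]]]].
- exists m, l, E, (fun j => Rs (g j)); split => //.
  + move=> j; have [D HD] := Hv (g j).
    have HK := esupK_eq HU (Hg j).
    have tr : forall a, a \in icK P (g j) -> a \in esup_K P j by move=> a; rewrite HK.
    pose s' (s : {j' : 'I_N | j' \in esup_K P j} -> 'I_m -> A)
      : {j' : 'I_N | j' \in icK P (g j)} -> 'I_m -> A :=
      fun k => s (exist _ (sval k) (tr _ (svalP k))).
    exists (fun c s j0 _ => D c (s' s) j (Hg j)).
    move=> xx j0 hj; have e : j0 = j by apply/set1P.
    rewrite [in RHS]e; exact: (HD xx j (Hg j)).
  + move=> j; have := Hl (g j).
    have Wp : (0 < #|icW P (g j)|)%N by apply/card_gt0P; exists j; exact: Hg.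
    have mp : (0 : R) < m%:R by rewrite ltr0n.
    rewrite /= cards1 mulr1 !ler_pdivrMr ?mul1r ?mulr_gt0 ?ltr0n // => H.
    apply: le_trans H _; rewrite mulrC ler_wpM2r ?ler0n // ler_nat.
    exact: (leq_bigmax (g j)).
- exists m, l, E, (fun i => \big[@finset.setU _/finset.set0]_(j in icW P i) Rs j); split => //.
  + move=> i.
    have HD : forall j : 'I_N, j \in icW P i -> exists D :
      ({k : 'I_l | k \in Rs j} -> A) ->
      ({j' : 'I_N | j' \in icK P i} -> 'I_m -> A) -> 'I_m -> A,
      forall x : 'I_N -> 'I_m -> A,
        D (fun k => E x (sval k)) (fun j' => x (sval j')) = x j.
      move=> j Hj; have [D HD] := Hv j.
      have HK := esupK_eq HU Hj.
      have tr : forall a, a \in esup_K P j -> a \in icK P i by move=> a; rewrite HK.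
      exists (fun c s => D c (fun k => s (exist _ (sval k)
          (tr _ (svalP k)))) j (set11 j)).
      move=> xx; exact: HD.
    pose Dj (j : 'I_N) (Hj : j \in icW P i) := sval (cid (HD j Hj)).
    exists (fun c s j Hj => Dj j Hj (fun k => c (exist _ (sval k)
       (fintype.subsetP (finset.bigcup_sup (F:=Rs) j Hj) _ (svalP k)))) s).
    move=> xx j Hj; exact: (svalP (cid (HD j Hj)) xx).
  + move=> i; have [j Hj] := Hne i.
    have Wp : (0 < #|icW P i|)%N by apply/card_gt0P; exists j.
    have mp : (0 : R) < m%:R by rewrite ltr0n.
    rewrite ler_pdivrMr ?mulr_gt0 ?ltr0n // mul1r -natrM ler_nat.
    apply: (leq_trans (card_bigcup_sum _ _ _ _)).
    rewrite mulnC -sum_nat_const leq_sum // => j' _.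
    have := Hl j'; rewrite /= cards1 mulr1 ler_pdivrMr // mul1r ler_nat.
    by [].
Qed.
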